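(* Let $\mathfrak g$ be a finite-dimensional semisimple Lie algebra and $S\subset\Delta_+$ a nonempty set of positive roots closed under addition within $\Delta_+$. Then $$\widetilde{U(\bar{\mathfrak n}_S)}=U(\bar{\mathfrak n}_{S-})\oplus\widetilde{U(\bar{\mathfrak n}_S)\bar{\mathfrak n}_{S+}},$$ where $U(\bar{\mathfrak n}_{S-})$ is identified with the subspace $\{[\mu]:\mu\in F(S),\ \mathrm{Supp}(\mu)\subset M(S)_-\}$ of $\widetilde{U(\bar{\mathfrak n}_S)}$.
   Context: $\mathfrak g$ has Cartan subalgebra $\mathfrak h$, roots $\Delta$, positive roots $\Delta_+$; root vectors $x_\alpha$ satisfy $[x_\alpha,x_\beta]=C_{\alpha,\beta}x_{\alpha+\beta}$ ($C_{\alpha,\beta}=0$ if $\alpha+\beta$ is not a root). $S\subset\Delta_+$ nonempty with $\alpha,\beta\in S,\ \alpha+\beta\in\Delta_+\Rightarrow\alpha+\beta\in S$; $\mathfrak n_S=\bigoplus_{\alpha\in S}\mathbb Cx_\alpha$, $\bar{\mathfrak n}_S=\mathfrak n_S\otimes\mathbb C[t,t^{-1}]$, $\bar{\mathfrak n}_{S-}=\mathfrak n_S\otimes t^{-1}\mathbb C[t^{-1}]$, $\bar{\mathfrak n}_{S+}=\mathfrak n_S\otimes\mathbb C[t]$. $M(S)$ is the free monoid on $\mathbb Z\times S$ (words $a=((m_1,\beta_1),\dots,(m_p,\beta_p))$, concatenation $\circ$); $a\le j$ means $m_l+\cdots+m_p\le j$ for all $l$. For $\mu:M(S)\to\mathbb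 C$, $\mathrm{Supp}(\mu)=\{a:\mu(a)\ne0\}$, $\mathrm{Supp}_j(\mu)=\{a\in\mathrm{Supp}(\mu):a\le j\}$. $F(S)$ is the algebra of $\mu$ with every $\mathrm{Supp}_j(\mu)$ finite, product $(\mu_1\mu_2)(a)=\sum_{a=b\circ c}\mu_1(b)\mu_2(c)$; $X_\beta(m)$ is the indicator of a one-letter word and $X(a)=X_{\beta_1}(m_1)\cdots X_{\beta_p}(m_p)$. $\widetilde I_S$ is the two-sided ideal of $F(S)$ generated by $X_\alpha(m)X_\beta(l)-X_\beta(l)X_\alpha(m)-C_{\alpha,\beta}X_{\alpha+\beta}(m+l)$ ($\alpha,\beta\in S$), $\widetilde{U(\bar{\mathfrak n}_S)}=F(S)/\widetilde I_S$, $[\mu]$ the class of $\mu$. $M(S)_-$ is the set of words with all $m_l\le-1$; $M(S)_+$ is the set of words with $p\ge1$ and $m_l+\cdots+m_p\ge0$ for some $l$; $\widetilde{U(\bar{\mathfrak n}_S)\bar{\mathfrak n}_{S+}}=\{[\mu]:\mu\in F(S),\ \mathrm{Supp}(\mu)\subset M(S)_+\}$. *)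

(* Defs.v *)
From HB Require Import structures.
From mathcomp Require Import all_boot all_order all_algebra.
From mathcomp Require Import Rstruct complex.
Set Implicit Arguments.
Unset Strict Implicit.
Unset Printing Implicit Defensive.
Import Order.TTheory GRing.Theory Num.Theory.
Local Open Scope ring_scope.

Definition Cx : fieldType := (Rdefinitions.R)[i].

Section Lie.
Variables (L : vectType Cx) (br : L -> L -> L).

Definition lie_algebra : Prop :=
  [/\ (forall (a : Cx) x y z, br (a *: x + y) z = a *: br x z + br y z),
      (forall (a : Cx) x y z, br z (a *: x + y) = a *: br z x + br z y),
      (forall x, br x x = 0) &
      (forall x y z, br x (br y z) + br y (br z x) + br z (br x y) = 0)].

(* [U, V] : the subspace spanned by all brackets [u, v], u in U, v in V
   (by bilinearity it is spanned by brackets of basis vectors). *)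
Definition brspace (U V : {vspace L}) : {vspace L} :=
  <<[seq br u v | u <- vbasis U, v <- vbasis V]>>%VS.

Definition lie_subalgebra (U : {vspace L}) : Prop :=
  forall x y, x \in U -> y \in U -> br x y \in U.

Definition lie_ideal (I : {vspace L}) : Prop :=
  forall x y, y \in I -> br x y \in I.

Definition solvable_sub (I : {vspace L}) : Prop :=
  exists k, iter k (fun U => brspace U U) I = 0%VS.

Definition nilpotent_sub (U : {vspace L}) : Prop :=
  exists k, iter k (fun V => brspace U V) U = 0%VS.

Definition semisimple : Prop :=
  forall I : {vspace L}, lie_ideal I -> solvable_sub I -> I = 0%VS.

Definition cartan_subalgebra (h : {vspace L}) : Prop :=
  [/\ lie_subalgebra h, nilpotent_sub h &
      (forall x, (forall y, y \in h -> br x y \in h) -> x \in h)].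

Variable h : {vspace L}.

Definition hdual := 'Hom(subvs_of h, Cx^o).

Definition in_rootspace (alpha : hdual) (v : L) : Prop :=
  forall t : subvs_of h, br (vsval t) v = (alpha t : Cx) *: v.

Definition is_root (alpha : hdual) : Prop :=
  alpha != 0 /\ exists2 v, v != 0 & in_rootspace alpha v.

Definition positive_system (P : hdual -> Prop) : Prop :=
  [/\ (forall a, P a -> is_root a),
      (forall a, is_root a -> P a \/ P (- a)),
      (forall a, P a -> ~ P (- a)) &
      (forall a b, P a -> P b -> is_root (a + b) -> P (a + b))].

End Lie.

Section Words.
Variables (A : zmodType) (S : A -> Prop).

Definition word := seq (int * A).

Definition in_MS (a : word) : Prop := forall x, List.In x a -> S x.2.

(* m_l + ... + m_p, for l = i+1 (0-based i) *)
Definition suffix_sum (a : word) (i : nat) : int :=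
  \sum_(x <- drop i a) x.1.

Definition word_le (a : word) (j : int) : Prop :=
  forall i, (i < size a)%N -> suffix_sum a i <= j.

(* mu : M(S) -> C is represented by a function on all words vanishing off M(S) *)
Definition series := word -> Cx.

Definition inF (mu : series) : Prop :=
  (forall a, mu a != 0 -> in_MS a) /\
  (forall j : int, exists s : seq word,
      forall a, mu a != 0 -> word_le a j -> a \in s).

Definition supp_in (mu : series) (X : word -> Prop) : Prop :=
  forall a, mu a != 0 -> X a.

Definition smul (mu1 mu2 : series) : series :=
  fun a => \sum_(i < (size a).+1) mu1 (take i a) * mu2 (drop i a).

Definition sadd (mu1 mu2 : series) : series := fun a => mu1 a + mu2 a.
Definition ssub (mu1 mu2 : series) : series := fun a => mu1 a - mu2 a.
Definition szero : series := fun _ => 0.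

(* indicator of a word; X_beta(m) = ind [:: (m, beta)] *)
Definition ind (w : word) : series := fun a => (a == w)%:R.

Variable C : A -> A -> Cx.

Definition gen (al : A) (m : int) (be : A) (l : int) : series :=
  fun a => ind [:: (m, al); (l, be)] a - ind [:: (l, be); (m, al)] a
           - C al be * ind [:: (m + l, al + be)] a.

Inductive inI : series -> Prop :=
| inI0 : inI szero
| inIadd mu1 mu2 : inI mu1 -> inI mu2 -> inI (sadd mu1 mu2)
| inIgen u v al m be l : inF u -> inF v -> S al -> S be ->
    inI (smul (smul u (gen al m be l)) v).

(* M(S)_- : all m_l <= -1 (includes the empty word) *)
Definition Mminus (a : word) : Prop := forall x, List.In x a -> x.1 <= -1.

Definition Mplus (a : word) : Prop :=
  (0 < size a)%N /\ exists2 i, (i < size a)%N & 0 <= suffix_sum a i.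

End Words.

(* Main.v *)
Require Import Defs.
From HB Require Import structures.
From mathcomp Require Import all_boot all_order all_algebra.
From mathcomp Require Import Rstruct complex.
From mathcomp Require Import ring zify.
From Stdlib Require Import FunctionalExtensionality.
Set Implicit Arguments.
Unset Strict Implicit.
Unset Printing Implicit Defensive.
Import Order.TTheory GRing.Theory Num.Theory.
Local Open Scope ring_scope.
Section FL.
Variable A : zmodType.

Definition fl := seq (Cx * word A).
Definition ev (t : fl) (w : word A) : Cx := \sum_(p <- t) p.1 * (p.2 == w)%:R.
Definition scale (k : Cx) (t : fl) : fl := [seq (k * p.1, p.2) | p <- t].
Definition lin (f : word A -> fl) (t : fl) : fl :=
  flatten [seq scale p.1 (f p.2) | p <- t].

Lemma ev_nil w : ev [::] w = 0.
Proof. by rewrite /ev big_nil. Qed.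

Lemma ev_cat t1 t2 w : ev (t1 ++ t2) w = ev t1 w + ev t2 w.
Proof. by rewrite /ev big_cat. Qed.

Lemma ev_cons p t w : ev (p :: t) w = p.1 * (p.2 == w)%:R + ev t w.
Proof. by rewrite /ev big_cons. Qed.

Lemma ev_scale k t w : ev (scale k t) w = k * ev t w.
Proof.
rewrite /ev /scale big_map mulr_sumr; apply: eq_bigr => p _ /=; by rewrite mulrA.
Qed.

Lemma ev_flatten ts w : ev (flatten ts) w = \sum_(t <- ts) ev t w.
Proof.
elim: ts => [|t ts IH]; first by rewrite big_nil ev_nil.
by rewrite /= ev_cat IH big_cons.
Qed.

Lemma lin_cat f t1 t2 : lin f (t1 ++ t2) = lin f t1 ++ lin f t2.
Proof. by rewrite /lin map_cat flatten_cat. Qed.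

Lemma lin_nil f : lin f [::] = [::].
Proof. by []. Qed.

Lemma lin_cons f p t : lin f (p :: t) = scale p.1 (f p.2) ++ lin f t.
Proof. by []. Qed.

Lemma sum_lin g t (G : word A -> Cx) :
  \sum_(p <- lin g t) p.1 * G p.2 =
  \sum_(p <- t) p.1 * \sum_(q <- g p.2) q.1 * G q.2.
Proof.
elim: t => [|p t IH]; first by rewrite /lin /= !big_nil.
rewrite lin_cons big_cat IH big_cons; congr (_ + _).
rewrite /scale big_map mulr_sumr; apply: eq_bigr => q _ /=; by rewrite mulrA.
Qed.

Lemma ev_lin f t w : ev (lin f t) w = \sum_(p <- t) p.1 * ev (f p.2) w.
Proof. by rewrite /ev (sum_lin _ _ (fun x => (x == w)%:R)). Qed.

Lemma sum_ev (U : seq (word A)) t (F : word A -> Cx) :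
  uniq U -> (forall p, p \in t -> p.2 \in U) ->
  \sum_(p <- t) p.1 * F p.2 = \sum_(w <- U) ev t w * F w.
Proof.
move=> uU tU.
have -> : \sum_(w <- U) ev t w * F w =
          \sum_(w <- U) \sum_(p <- t) p.1 * ((p.2 == w)%:R * F w).
  apply: eq_bigr => w _; rewrite /ev mulr_suml; apply: eq_bigr => p _.
  by rewrite mulrA.
rewrite exchange_big /=; apply: eq_big_seq => p pt; rewrite -mulr_sumr; congr (_ * _).
rewrite (bigD1_seq p.2) //= ?(tU p pt) // eqxx mul1r big1 ?addr0 // => w.
by rewrite eq_sym => /negbTE ->; rewrite mul0r.
Qed.

Lemma ev_sum_ext t1 t2 (F : word A -> Cx) : ev t1 =1 ev t2 ->
  \sum_(p <- t1) p.1 * F p.2 = \sum_(p <- t2) p.1 * F p.2.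
Proof.
move=> e.
set U := undup (map snd t1 ++ map snd t2).
have uU : uniq U by apply: undup_uniq.
rewrite (@sum_ev U) // ?(@sum_ev U t2) //.
- by apply: eq_bigr => w _; rewrite e.
- move=> p pt; rewrite mem_undup mem_cat; apply/orP; right; by apply: map_f.
- move=> p pt; rewrite mem_undup mem_cat; apply/orP; left; by apply: map_f.
Qed.

Lemma ev_lin_ext f t1 t2 : ev t1 =1 ev t2 -> ev (lin f t1) =1 ev (lin f t2).
Proof. move=> e w; rewrite !ev_lin; exact: (ev_sum_ext (fun u => ev (f u) w) e). Qed.

Lemma lin_comp f g t : ev (lin f (lin g t)) =1 ev (lin (fun w => lin f (g w)) t).
Proof.
move=> w; rewrite ev_lin (sum_lin _ _ (fun u => ev (f u) w)) ev_lin; apply: eq_bigr => p _.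
by rewrite ev_lin.
Qed.

Lemma ev_lin_scale f k t : ev (lin f (scale k t)) =1 ev (scale k (lin f t)).
Proof.
move=> w; rewrite ev_scale !ev_lin /scale big_map mulr_sumr.
apply: eq_bigr => p _ /=; by rewrite mulrA.
Qed.

Lemma ev_lin_fun f g t : (forall w, ev (f w) =1 ev (g w)) -> ev (lin f t) =1 ev (lin g t).
Proof. move=> e w; rewrite !ev_lin; apply: eq_bigr => p _; by rewrite e. Qed.

Lemma ev_lin_cat f g t w : ev (lin (fun u => f u ++ g u) t) w = ev (lin f t) w + ev (lin g t) w.
Proof. rewrite !ev_lin -big_split /=; apply: eq_bigr => p _; by rewrite ev_cat mulrDr. Qed.

Lemma ev_lin_scalef f k t w : ev (lin (fun u => scale k (f u)) t) w = k * ev (lin f t) w.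
Proof. rewrite !ev_lin mulr_sumr; apply: eq_bigr => p _; rewrite ev_scale; ring. Qed.

Section Closure.
Variable P : fl -> Prop.
Hypotheses (P0 : P [::]) (Papp : forall t1 t2, P t1 -> P t2 -> P (t1 ++ t2))
  (Pscale : forall k t, P t -> P (scale k t))
  (Pev : forall t t', P t -> ev t =1 ev t' -> P t').

Lemma P_lin f t : (forall p, p \in t -> P (f p.2)) -> P (lin f t).
Proof.
elim: t => [|p t IH] H; first exact: P0.
rewrite lin_cons; apply: Papp; first by apply: Pscale; apply: H; rewrite inE eqxx.
apply: IH => q qt; apply: H; by rewrite inE qt orbT.
Qed.

Lemma P_ev0 t : (forall w, ev t w = 0) -> P t.
Proof. move=> e; apply: (Pev P0) => w; by rewrite ev_nil e. Qed.

Lemma Pcomb t (ts : seq (Cx * fl)) : (forall q, q \in ts -> P q.2) ->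
  (forall w, ev t w = \sum_(q <- ts) q.1 * ev q.2 w) -> P t.
Proof.
move=> H e.
have Pf : P (flatten [seq scale q.1 q.2 | q <- ts]).
  elim: ts H {e} => [|q ts IH] H /=; first exact: P0.
  apply: Papp; first by apply: Pscale; apply: H; rewrite inE eqxx.
  apply: IH => q' qt; apply: H; by rewrite inE qt orbT.
apply: (Pev Pf) => w; rewrite e ev_flatten big_map; apply: eq_bigr => q _.
by rewrite ev_scale.
Qed.

End Closure.
End FL.
Lemma InE (T : eqType) (x : T) (s : seq T) : List.In x s <-> x \in s.
Proof.
elim: s => [|y s IH] /=; first by split.
rewrite inE; split.
- case=> [->|/IH ->]; by rewrite ?eqxx ?orbT.
- case/orP=> [/eqP ->|/IH]; by [left|right].
Qed.

Section Rep.
Variables (A : zmodType) (S : A -> Prop) (C : A -> A -> Cx).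
Hypothesis Ccl : forall a b, S a -> S b -> C a b != 0 -> S (a + b).
Hypothesis Canti : forall a b, S a -> S b -> C a b = - C b a.
Hypothesis Cjac : forall a b c, S a -> S b -> S c ->
  C b c * C a (b + c) + C c a * C b (c + a) + C a b * C c (a + b) = 0.

Local Notation letter := (int * A)%type.
Local Notation wd := (word A).

Definition lneg (x : letter) : bool := x.1 <= -1.
Definition ladd (x y : letter) : letter := (x.1 + y.1, x.2 + y.2).
Definition kap (x y : letter) : Cx := C x.2 y.2.

Definition lmul (c : letter) (t : fl A) : fl A := lin (fun w => [:: (1, c :: w)]) t.

Fixpoint act (w : wd) (l : letter) : fl A :=
  match w with
  | [::] => [::]
  | c :: w' => lmul c (act w' l) ++
      (if kap l c == 0 then [::] else scale (kap l c)
         (let z := ladd l c in if lneg z then [:: (1, z :: w')] else act w' z))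
  end.

Definition rho1 (l : letter) (w : wd) : fl A :=
  if lneg l then [:: (1, l :: w)] else act w l.

Definition Rho (l : letter) (t : fl A) : fl A := lin (rho1 l) t.

Definition genl (u : wd) (a b : letter) (v : wd) : fl A :=
  [:: (1, u ++ a :: b :: v); (-1, u ++ b :: a :: v)] ++
  (if kap a b == 0 then [::] else [:: (- kap a b, u ++ ladd a b :: v)]).

Definition NSw (w : wd) : Prop := forall x, x \in w -> S x.2 /\ lneg x.
Definition NSl (t : fl A) : Prop := forall p, p \in t -> NSw p.2.

Inductive J : fl A -> Prop :=
| J0 : J [::]
| Japp t1 t2 : J t1 -> J t2 -> J (t1 ++ t2)
| Jscale k t : J t -> J (scale k t)
| Jev t t' : J t -> ev t =1 ev t' -> J t'
| Jgen u a b v : NSw u -> S a.2 -> lneg a -> S b.2 -> lneg b -> NSw v ->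
    J (genl u a b v).

Lemma J_lin f t : (forall p, p \in t -> J (f p.2)) -> J (lin f t).
Proof. exact: (P_lin J0 Japp Jscale). Qed.

Lemma J_ev0 t : (forall w, ev t w = 0) -> J t.
Proof. exact: (P_ev0 J0 Jev). Qed.

Lemma J_comb t (ts : seq (Cx * fl A)) : (forall q, q \in ts -> J q.2) ->
  (forall w, ev t w = \sum_(q <- ts) q.1 * ev q.2 w) -> J t.
Proof. exact: (Pcomb J0 Japp Jscale Jev). Qed.

Lemma ev1 (x w : wd) : ev [:: (1, x)] w = (x == w)%:R.
Proof. by rewrite ev_cons ev_nil mul1r addr0. Qed.

Lemma ev_lmul c t w : ev (lmul c t) w = \sum_(p <- t) p.1 * (c :: p.2 == w)%:R.
Proof. rewrite /lmul ev_lin; apply: eq_bigr => p _; by rewrite ev1. Qed.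

Lemma ev_lmul_map c t : ev (lmul c t) =1 ev [seq (p.1, c :: p.2) | p <- t].
Proof. move=> w; by rewrite ev_lmul /ev big_map. Qed.

Lemma ev_genl u a b v w : ev (genl u a b v) w =
  (u ++ a :: b :: v == w)%:R - (u ++ b :: a :: v == w)%:R
  - kap a b * (u ++ ladd a b :: v == w)%:R.
Proof.
rewrite /genl ev_cat !ev_cons ev_nil; have [k0|k0] := eqVneq (kap a b) 0.
  by rewrite k0 /= ev_nil; ring.
by rewrite /= ev_cons ev_nil /=; ring.
Qed.

Lemma lneg_add x y : lneg x -> lneg y -> lneg (ladd x y).
Proof. rewrite /lneg /ladd /=; lia. Qed.

Lemma nlneg_add x y : ~~ lneg x -> ~~ lneg y -> ~~ lneg (ladd x y).
Proof. rewrite /lneg /ladd /=; lia. Qed.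

Lemma J_lmul c t : S c.2 -> lneg c -> J t -> J (lmul c t).
Proof.
move=> Sc nc; elim=> {t}.
- exact: J0.
- move=> t1 t2 _ H1 _ H2; rewrite /lmul lin_cat; exact: Japp.
- move=> k t _ H; apply: (Jev (Jscale k H)) => w; by rewrite ev_lin_scale.
- move=> t t' _ H e; apply: (Jev H); exact: ev_lin_ext.
- move=> u a b v Nu Sa na Sb nb Nv.
  apply: (Jev (Jgen (u := c :: u) _ Sa na Sb nb Nv)).
    by move=> x; rewrite inE => /orP [/eqP ->|/Nu].
  move=> w; rewrite ev_lmul ev_genl /genl big_cat !big_cons big_nil /=.
  have [k0|k0] := eqVneq (kap a b) 0.
    by rewrite k0 /= big_nil /=; ring.
  by rewrite /= big_cons big_nil /=; ring.
Qed.

Lemma rho1_neg l w : lneg l -> rho1 l w = [:: (1, l :: w)].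
Proof. by rewrite /rho1 => ->. Qed.

Lemma rho1_nil l : ~~ lneg l -> rho1 l [::] = [::].
Proof. by rewrite /rho1 => /negbTE ->. Qed.

Lemma rho1_cons l c w : ~~ lneg l -> rho1 l (c :: w) = lmul c (rho1 l w) ++
  (if kap l c == 0 then [::] else scale (kap l c) (rho1 (ladd l c) w)).
Proof. by rewrite /rho1 => /negbTE -> /=. Qed.

Lemma ev_rho1_cons l c w w0 : ~~ lneg l -> ev (rho1 l (c :: w)) w0 =
  ev (lmul c (rho1 l w)) w0 + kap l c * ev (rho1 (ladd l c) w) w0.
Proof.
move=> nl; rewrite rho1_cons // ev_cat; have [k0|k0] := eqVneq (kap l c) 0.
  by rewrite k0 /= ev_nil mul0r.
by rewrite /= ev_scale.
Qed.

Lemma ev_Rho1 l x w : ev (Rho l [:: (1, x)]) w = ev (rho1 l x) w.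
Proof. by rewrite /Rho ev_lin big_cons big_nil mul1r addr0. Qed.

Lemma ev_Rho l t w : ev (Rho l t) w = \sum_(p <- t) p.1 * ev (rho1 l p.2) w.
Proof. exact: ev_lin. Qed.

Lemma mem_lin (P : wd -> Prop) f t :
  (forall q, q \in t -> forall p, p \in f q.2 -> P p.2) ->
  forall p, p \in lin f t -> P p.2.
Proof.
elim: t => [|q t IH] H p; first by [].
rewrite lin_cons mem_cat => /orP [|].
  case/mapP=> p' p'f -> /=; exact: (H q (mem_head _ _) p' p'f).
apply: IH => q' q't; apply: H; by rewrite inE q't orbT.
Qed.

Lemma mem_scale k (t : fl A) p : p \in scale k t -> exists2 q, q \in t & p.2 = q.2.
Proof. by case/mapP=> q qt ->; exists q. Qed.

Lemma NS_lmul c t : S c.2 -> lneg c -> NSl t -> NSl (lmul c t).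
Proof.
move=> Sc nc Nt; apply: mem_lin => q qt p; rewrite inE => /eqP -> x /=.
rewrite inE => /orP [/eqP ->|]; first by [].
by apply: Nt.
Qed.

Lemma NS_rho1 w l : NSw w -> S l.2 -> NSl (rho1 l w).
Proof.
elim: w l => [|c w IH] l Nw Sl.
  rewrite /rho1; case: ifP => nl p /=; last by rewrite in_nil.
  rewrite inE => /eqP -> x /=.
  by rewrite inE => /eqP ->.
have Nc : S c.2 /\ lneg c by apply: Nw; rewrite inE eqxx.
have Nw' : NSw w by move=> x xw; apply: Nw; rewrite inE xw orbT.
case nl: (lneg l).
  rewrite rho1_neg // => p; rewrite inE => /eqP -> x /=.
  rewrite inE => /orP [/eqP ->|]; first by [].
  by apply: Nw.
rewrite rho1_cons ?nl // => p; rewrite mem_cat => /orP [].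
  apply: NS_lmul; [by case: Nc|by case: Nc|exact: IH].
have [k0|k0] := eqVneq (kap l c) 0; first by [].
move=> /mem_scale [q qr ->]; move: q qr.
apply: IH => //; rewrite /ladd /=; apply: Ccl => //; by case: Nc.
Qed.

Lemma NS_lin f t : (forall q, q \in t -> NSl (f q.2)) -> NSl (lin f t).
Proof. move=> H; apply: mem_lin => q qt p pf; exact: H qt p pf. Qed.

Lemma NS_Rho l t : S l.2 -> NSl t -> NSl (Rho l t).
Proof. move=> Sl Nt; apply: NS_lin => q qt; apply: NS_rho1 => //; exact: Nt. Qed.

Lemma Cprod_anti x y z : S x -> S y -> S z ->
  C x y * C (x + y) z = - (C x y * C z (x + y)).
Proof.
move=> Sx Sy Sz; case: (C x y =P 0) => [->|/eqP nz]; first by rewrite !mul0r oppr0.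
by rewrite (Canti (Ccl Sx Sy nz) Sz) mulrN.
Qed.

Lemma jac3 l a b : S l -> S a -> S b ->
  C l a * C (l + a) b - C l b * C (l + b) a - C a b * C l (a + b) = 0.
Proof.
move=> Sl Sa Sb.
rewrite (Cprod_anti Sl Sa Sb) (Cprod_anti Sl Sb Sa) (Canti Sl Sb).
have := Cjac Sl Sa Sb; rewrite (addrC b l) (addrC l a).
move=> H; rewrite -[RHS]oppr0 -H; ring.
Qed.

Lemma ladd_AC x y z : ladd (ladd x y) z = ladd (ladd x z) y.
Proof. by rewrite /ladd /= addrAC [X in (_, X)]addrAC. Qed.

Lemma ladd_A x y z : ladd x (ladd y z) = ladd (ladd x y) z.
Proof. by rewrite /ladd /= !addrA. Qed.

Lemma ladd_C x y : ladd x y = ladd y x.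
Proof. by rewrite /ladd addrC [X in (_, X)]addrC. Qed.


Definition trip (X Y : fl A) (k : Cx) (Z : fl A) : fl A := X ++ scale (-1) Y ++ scale (- k) Z.

Lemma ev_trip X Y k Z w : ev (trip X Y k Z) w = ev X w - ev Y w - k * ev Z w.
Proof. rewrite /trip !ev_cat !ev_scale; ring. Qed.

Lemma ev_lin_trip f X Y k Z w :
  ev (lin f (trip X Y k Z)) w = ev (lin f X) w - ev (lin f Y) w - k * ev (lin f Z) w.
Proof. rewrite /trip !lin_cat !ev_cat !ev_lin_scale !ev_scale; ring. Qed.

Lemma ev_lmul_trip c X Y k Z w :
  ev (lmul c (trip X Y k Z)) w = ev (lmul c X) w - ev (lmul c Y) w - k * ev (lmul c Z) w.
Proof. exact: ev_lin_trip. Qed.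

Lemma ev_Rho_trip l X Y k Z w :
  ev (Rho l (trip X Y k Z)) w = ev (Rho l X) w - ev (Rho l Y) w - k * ev (Rho l Z) w.
Proof. exact: ev_lin_trip. Qed.

Lemma inJ_cons (q : Cx * fl A) ts : J q.2 -> (forall q', q' \in ts -> J q'.2) ->
  forall q', q' \in q :: ts -> J q'.2.
Proof. by move=> Hq Hts q'; rewrite inE => /orP [/eqP ->|/Hts]. Qed.

Lemma inJ_nil : forall q : Cx * fl A, q \in [::] -> J q.2.
Proof. by []. Qed.

Lemma J_scale_if k t : (k != 0 -> J t) -> J (scale k t).
Proof.
have [->|k0] := eqVneq k 0 => H; last by apply: Jscale; apply: H.
by apply: J_ev0 => w; rewrite ev_scale mul0r.
Qed.

Lemma NSw_cons c w : NSw (c :: w) <-> (S c.2 /\ lneg c) /\ NSw w.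
Proof.
split.
  move=> H; split; first by apply: H; rewrite inE eqxx.
  by move=> x xw; apply: H; rewrite inE xw orbT.
by case=> Hc Hw x; rewrite inE => /orP [/eqP ->|/Hw].
Qed.

Lemma NSw_cat u v : NSw u -> NSw v -> NSw (u ++ v).
Proof. by move=> Hu Hv x; rewrite mem_cat => /orP [/Hu|/Hv]. Qed.

Lemma NS_genl u a b v : NSw u -> S a.2 -> lneg a -> S b.2 -> lneg b -> NSw v ->
  NSl (genl u a b v).
Proof.
move=> Nu Sa na Sb nb Nv p; rewrite /genl mem_cat => /orP [].
  rewrite !inE => /orP [] /eqP -> /=; apply: NSw_cat => //;
  by do 2! (apply/NSw_cons; split => //).
have [k0|k0] := eqVneq (kap a b) 0 => //.
rewrite inE => /eqP -> /=; apply: NSw_cat => //; apply/NSw_cons; split => //.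
split; [exact: Ccl|exact: lneg_add].
Qed.

Lemma L1w l c w : S l.2 -> S c.2 -> lneg c -> NSw w ->
  J (trip (rho1 l (c :: w)) (lmul c (rho1 l w)) (kap l c) (rho1 (ladd l c) w)).
Proof.
move=> Sl Sc nc Nw; case nl: (lneg l); last first.
  apply: J_ev0 => w0; rewrite ev_trip ev_rho1_cons ?nl //; ring.
apply: (Jev (Jgen (u := [::]) _ Sl nl Sc nc Nw)) => // w0.
rewrite ev_genl ev_trip !rho1_neg ?lneg_add // !ev1 ev_lmul big_cons big_nil /=.
ring.
Qed.

Lemma L1k k l c w : (k != 0 -> [/\ S l.2, S c.2, lneg c & NSw w]) ->
  J (scale k (trip (rho1 l (c :: w)) (lmul c (rho1 l w)) (kap l c) (rho1 (ladd l c) w))).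
Proof. move=> H; apply: J_scale_if => /H [*]; exact: L1w. Qed.

Lemma ev_Rho_lmul l c t w :
  ev (Rho l (lmul c t)) w = \sum_(p <- t) p.1 * ev (rho1 l (c :: p.2)) w.
Proof.
rewrite /Rho /lmul lin_comp ev_lin; apply: eq_bigr => p _.
by rewrite ev_lin big_cons big_nil mul1r addr0.
Qed.

Lemma ev_lmul_Rho c l t w :
  ev (lmul c (Rho l t)) w = \sum_(p <- t) p.1 * ev (lmul c (rho1 l p.2)) w.
Proof. by rewrite /Rho /lmul lin_comp ev_lin. Qed.

Lemma L1l l c t : S l.2 -> S c.2 -> lneg c -> NSl t ->
  J (trip (Rho l (lmul c t)) (lmul c (Rho l t)) (kap l c) (Rho (ladd l c) t)).
Proof.
move=> Sl Sc nc Nt.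
have HJ := J_lin (f := fun w => trip (rho1 l (c :: w)) (lmul c (rho1 l w)) (kap l c)
   (rho1 (ladd l c) w)) (t := t) (fun p pt => L1w Sl Sc nc (Nt p pt)).
apply: (Jev HJ) => w; rewrite ev_trip ev_Rho_lmul ev_lmul_Rho !ev_Rho ev_lin.
rewrite mulr_sumr -!sumrB; apply: eq_bigr => p _; rewrite ev_trip; ring.
Qed.

Lemma ev_Rho_genl l u a b v w : ev (Rho l (genl u a b v)) w =
  ev (rho1 l (u ++ a :: b :: v)) w - ev (rho1 l (u ++ b :: a :: v)) w
  - kap a b * ev (rho1 l (u ++ ladd a b :: v)) w.
Proof.
rewrite ev_Rho /genl big_cat !big_cons big_nil /=.
have [k0|k0] := eqVneq (kap a b) 0.
  by rewrite k0 big_nil; ring.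
by rewrite big_cons big_nil /=; ring.
Qed.

Lemma ev_lin_genl a b X w : ev (lin (fun x => genl [::] a b x) X) w =
  ev (lmul a (lmul b X)) w - ev (lmul b (lmul a X)) w - kap a b * ev (lmul (ladd a b) X) w.
Proof.
rewrite /lmul !lin_comp !ev_lin mulr_sumr -!sumrB; apply: eq_bigr => p _.
rewrite ev_genl !ev_lin !big_cons !big_nil /= !ev1 /=; ring.
Qed.

Lemma Rho_gen a b v : S a.2 -> lneg a -> S b.2 -> lneg b -> NSw v ->
  forall u, NSw u -> forall l, S l.2 -> J (Rho l (genl u a b v)).
Proof.
move=> Sa na Sb nb Nv; elim=> [|u1 u IH] Nu l Sl.
- have Nbv : NSw (b :: v) by apply/NSw_cons.
  have Nav : NSw (a :: v) by apply/NSw_cons.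
  have Nabv : NSw (ladd a b :: v) -> True by [].
  set X := rho1 l v.
  apply: (J_comb (ts := [::
    (1, trip (rho1 l (a :: b :: v)) (lmul a (rho1 l (b :: v))) (kap l a) (rho1 (ladd l a) (b :: v)));
    (1, lmul a (trip (rho1 l (b :: v)) (lmul b (rho1 l v)) (kap l b) (rho1 (ladd l b) v)));
    (1, scale (kap l a) (trip (rho1 (ladd l a) (b :: v)) (lmul b (rho1 (ladd l a) v)) (kap (ladd l a) b) (rho1 (ladd (ladd l a) b) v)));
    (-1, trip (rho1 l (b :: a :: v)) (lmul b (rho1 l (a :: v))) (kap l b) (rho1 (ladd l b) (a :: v)));
    (-1, lmul b (trip (rho1 l (a :: v)) (lmul a (rho1 l v)) (kap l a) (rho1 (ladd l a) v)));
    (-1, scale (kap l b) (trip (rho1 (ladd l b) (a :: v)) (lmul a (rho1 (ladd l b) v)) (kap (ladd l b) a) (rho1 (ladd (ladd l b) a) v)));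
    (-1, scale (kap a b) (trip (rho1 l (ladd a b :: v)) (lmul (ladd a b) (rho1 l v)) (kap l (ladd a b)) (rho1 (ladd l (ladd a b)) v)));
    (1, lin (fun x => genl [::] a b x) X)])).
  + apply: inJ_cons; first exact: L1w.
    apply: inJ_cons; first by apply: J_lmul => //; apply: L1w.
    apply: inJ_cons; first by apply: L1k => k0; split => //; apply: Ccl.
    apply: inJ_cons; first exact: L1w.
    apply: inJ_cons; first by apply: J_lmul => //; apply: L1w.
    apply: inJ_cons; first by apply: L1k => k0; split => //; apply: Ccl.
    apply: inJ_cons; first by apply: L1k => k0; split => //; [exact: Ccl|exact: lneg_add].
    apply: inJ_cons; last exact: inJ_nil.
    apply: J_lin => p pX; apply: Jgen => //; exact: (NS_rho1 Nv Sl pX).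
  + move=> w; rewrite !big_cons big_nil /= ev_Rho_genl /=.
    rewrite !ev_trip !ev_scale !ev_trip !ev_lmul_trip ev_lin_genl.
    rewrite -/X (ladd_AC l b a) -(ladd_A l a b).
    apply/eqP; rewrite -subr_eq0; apply/eqP.
    have Hj : kap l a * kap (ladd l a) b - kap l b * kap (ladd l b) a -
      kap a b * kap l (ladd a b) = 0 by rewrite /kap /ladd /=; exact: jac3.
    transitivity ((kap l a * kap (ladd l a) b - kap l b * kap (ladd l b) a -
      kap a b * kap l (ladd a b)) * ev (rho1 (ladd l (ladd a b)) v) w).
      ring.
    by rewrite Hj mul0r.
- case/NSw_cons: Nu => [[Su1 nu1] Nu'].
  have NG := NS_genl Nu' Sa na Sb nb Nv.
  set G := genl u a b v.
  have eG : ev (lmul u1 G) =1 ev (genl (u1 :: u) a b v).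
    move=> w; rewrite ev_lmul ev_genl /G /genl big_cat !big_cons big_nil /=.
    have [k0|k0] := eqVneq (kap a b) 0.
      by rewrite k0 /= big_nil /=; ring.
    by rewrite /= big_cons big_nil /=; ring.
  apply: (J_comb (ts := [::
    (1, trip (Rho l (lmul u1 G)) (lmul u1 (Rho l G)) (kap l u1) (Rho (ladd l u1) G));
    (1, lmul u1 (Rho l G)); (1, scale (kap l u1) (Rho (ladd l u1) G))])).
  + apply: inJ_cons; first exact: L1l.
    apply: inJ_cons; first by apply: J_lmul => //; apply: IH.
    apply: inJ_cons; last exact: inJ_nil.
    by apply: J_scale_if => k0; apply: IH => //; apply: Ccl.
  + move=> w; rewrite !big_cons big_nil /= -(ev_lin_ext (rho1 l) eG w).
    rewrite ev_trip ev_scale; ring.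
Qed.

Lemma COMPAT l t : S l.2 -> J t -> J (Rho l t).
Proof.
move=> Sl; elim=> {t}.
- exact: J0.
- move=> t1 t2 _ H1 _ H2; rewrite /Rho lin_cat; exact: Japp.
- move=> k t _ H; apply: (Jev (Jscale k H)) => w; by rewrite ev_lin_scale.
- move=> t t' _ H e; apply: (Jev H); exact: ev_lin_ext.
- move=> u a b v Nu Sa na Sb nb Nv; exact: Rho_gen.
Qed.

Lemma NSl1 (w : wd) : NSw w -> NSl [:: (1, w)].
Proof. by move=> Nw p; rewrite inE => /eqP ->. Qed.

Lemma REP w : NSw w -> forall a b, S a.2 -> S b.2 ->
  J (trip (Rho a (rho1 b w)) (Rho b (rho1 a w)) (kap a b) (rho1 (ladd a b) w)).
Proof.
elim: w => [|c w IH] Nw a b Sa Sb.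
- case na: (lneg a); case nb: (lneg b).
  + apply: (Jev (Jgen (u := [::]) (v := [::]) _ Sa na Sb nb _)) => // w0.
    rewrite ev_genl ev_trip !rho1_neg ?lneg_add // !ev_Rho1 !rho1_neg // !ev1 /=; ring.
  + apply: J_ev0 => w0; rewrite ev_trip (rho1_nil (l := b)) ?nb // rho1_neg //.
    rewrite ev_Rho1 ev_rho1_cons ?nb // ev_lmul rho1_nil ?nb // big_nil.
    rewrite /Rho lin_nil ev_nil (ladd_C b a) /kap (Canti Sb Sa); ring.
  + apply: J_ev0 => w0; rewrite ev_trip (rho1_nil (l := a)) ?na // rho1_neg //.
    rewrite ev_Rho1 ev_rho1_cons ?na // ev_lmul rho1_nil ?na // big_nil.
    rewrite /Rho lin_nil ev_nil; ring.
  + apply: J_ev0 => w0; rewrite ev_trip !rho1_nil ?na ?nb ?nlneg_add ?na ?nb //.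
    by rewrite /Rho lin_nil ev_nil; ring.
- case/NSw_cons: Nw => [[Sc nc] Nw'].
  have NTa := NS_rho1 Nw' Sa; have NTb := NS_rho1 Nw' Sb.
  apply: (J_comb (ts := [::
    (1, Rho a (trip (rho1 b (c :: w)) (lmul c (rho1 b w)) (kap b c) (rho1 (ladd b c) w)));
    (1, trip (Rho a (lmul c (rho1 b w))) (lmul c (Rho a (rho1 b w))) (kap a c) (Rho (ladd a c) (rho1 b w)));
    (-1, Rho b (trip (rho1 a (c :: w)) (lmul c (rho1 a w)) (kap a c) (rho1 (ladd a c) w)));
    (-1, trip (Rho b (lmul c (rho1 a w))) (lmul c (Rho b (rho1 a w))) (kap b c) (Rho (ladd b c) (rho1 a w)));
    (-1, scale (kap a b) (trip (rho1 (ladd a b) (c :: w)) (lmul c (rho1 (ladd a b) w)) (kap (ladd a b) c) (rho1 (ladd (ladd a b) c) w)));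
    (1, lmul c (trip (Rho a (rho1 b w)) (Rho b (rho1 a w)) (kap a b) (rho1 (ladd a b) w)));
    (1, scale (kap a c) (trip (Rho (ladd a c) (rho1 b w)) (Rho b (rho1 (ladd a c) w)) (kap (ladd a c) b) (rho1 (ladd (ladd a c) b) w)));
    (1, scale (kap b c) (trip (Rho a (rho1 (ladd b c) w)) (Rho (ladd b c) (rho1 a w)) (kap a (ladd b c)) (rho1 (ladd a (ladd b c)) w)))])).
  + apply: inJ_cons; first by apply: COMPAT => //; apply: L1w.
    apply: inJ_cons; first exact: L1l.
    apply: inJ_cons; first by apply: COMPAT => //; apply: L1w.
    apply: inJ_cons; first exact: L1l.
    apply: inJ_cons; first by apply: L1k => k0; split => //; apply: Ccl.
    apply: inJ_cons; first by apply: J_lmul => //; apply: IH.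
    apply: inJ_cons; first by apply: J_scale_if => k0; apply: IH => //; apply: Ccl.
    apply: inJ_cons; last exact: inJ_nil.
    by apply: J_scale_if => k0; apply: IH => //; apply: Ccl.
  + move=> w0; rewrite !big_cons big_nil /=.
    rewrite !ev_trip !ev_scale !ev_Rho_trip !ev_trip !ev_lmul_trip.
    rewrite (ladd_AC a c b) -(ladd_A a b c).
    have Hj : kap a c * kap (ladd a c) b + kap b c * kap a (ladd b c) -
      kap a b * kap (ladd a b) c = 0.
      rewrite /kap /ladd /= (Canti Sb Sc) (addrC b.2 c.2).
      by rewrite -[RHS](jac3 Sa Sc Sb) mulNr addrAC.
    apply/eqP; rewrite -subr_eq0; apply/eqP.
    transitivity ((kap a c * kap (ladd a c) b + kap b c * kap a (ladd b c) -
      kap a b * kap (ladd a b) c) * ev (rho1 (ladd a (ladd b c)) w) w0).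
      ring.
    by rewrite Hj mul0r.
Qed.

Lemma REPl a b t : S a.2 -> S b.2 -> NSl t ->
  J (trip (Rho a (Rho b t)) (Rho b (Rho a t)) (kap a b) (Rho (ladd a b) t)).
Proof.
move=> Sa Sb Nt.
have HJ := J_lin (f := fun w => trip (Rho a (rho1 b w)) (Rho b (rho1 a w)) (kap a b)
   (rho1 (ladd a b) w)) (t := t) (fun p pt => REP (Nt p pt) Sa Sb).
apply: (Jev HJ) => w; rewrite ev_trip /Rho !lin_comp -/(Rho _ _) !ev_lin.
rewrite mulr_sumr -!sumrB; apply: eq_bigr => p _; rewrite ev_trip; ring.
Qed.

Definition RhoW (b : wd) (t : fl A) : fl A := foldr Rho t b.
Definition unit1 : fl A := [:: (1, [::])].
Definition Rw (w : wd) : fl A := RhoW w unit1.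
Definition Sw (w : wd) : Prop := forall x, x \in w -> S x.2.

Lemma RhoW_cat b1 b2 t : RhoW (b1 ++ b2) t = RhoW b1 (RhoW b2 t).
Proof. by rewrite /RhoW foldr_cat. Qed.

Lemma RhoW_nil b : RhoW b [::] = [::].
Proof. by elim: b => //= l b ->. Qed.

Lemma ev_RhoW_ext b t1 t2 : ev t1 =1 ev t2 -> ev (RhoW b t1) =1 ev (RhoW b t2).
Proof. elim: b => //= l b IH e; apply: ev_lin_ext; exact: IH. Qed.

Lemma ev_RhoW_trip b X Y k Z :
  ev (RhoW b (trip X Y k Z)) =1 ev (trip (RhoW b X) (RhoW b Y) k (RhoW b Z)).
Proof.
elim: b => //= l b IH w.
by rewrite (ev_lin_ext _ IH w) -/(Rho _ _) ev_Rho_trip ev_trip.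
Qed.

Lemma Sw_cons c w : Sw (c :: w) <-> S c.2 /\ Sw w.
Proof.
split.
  move=> H; split; first by apply: H; rewrite inE eqxx.
  by move=> x xw; apply: H; rewrite inE xw orbT.
by case=> Hc Hw x; rewrite inE => /orP [/eqP ->|/Hw].
Qed.

Lemma J_RhoW b t : Sw b -> J t -> J (RhoW b t).
Proof.
elim: b => //= l b IH /Sw_cons [Sl Sb] Jt; apply: COMPAT => //; exact: IH.
Qed.

Lemma NS_RhoW b t : Sw b -> NSl t -> NSl (RhoW b t).
Proof.
elim: b => //= l b IH /Sw_cons [Sl Sb] Nt; apply: NS_Rho => //; exact: IH.
Qed.

Lemma NS_unit : NSl unit1.
Proof. by move=> p; rewrite inE => /eqP -> x. Qed.

Lemma ev_lin_genl2 f u a b v w : ev (lin f (genl u a b v)) w =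
  ev (f (u ++ a :: b :: v)) w - ev (f (u ++ b :: a :: v)) w
  - kap a b * ev (f (u ++ ladd a b :: v)) w.
Proof.
rewrite ev_lin /genl big_cat !big_cons big_nil /=.
have [k0|k0] := eqVneq (kap a b) 0.
  by rewrite k0 big_nil; ring.
by rewrite big_cons big_nil /=; ring.
Qed.

Lemma J_genR b x y c : Sw b -> Sw c -> S x.2 -> S y.2 -> J (lin Rw (genl b x y c)).
Proof.
move=> Sb Sc Sx Sy.
have HJ := J_RhoW Sb (REPl Sx Sy (NS_RhoW Sc NS_unit)).
apply: (Jev HJ) => w; rewrite ev_RhoW_trip ev_trip ev_lin_genl2 /Rw !RhoW_cat /=.
by [].
Qed.

Definition deg (w : wd) : int := \sum_(x <- w) x.1.

Lemma deg_cons c w : deg (c :: w) = c.1 + deg w.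
Proof. by rewrite /deg big_cons. Qed.

Lemma deg_cat u v : deg (u ++ v) = deg u + deg v.
Proof. by rewrite /deg big_cat. Qed.

Lemma deg_neg w : all lneg w -> w != [::] -> deg w <= -1.
Proof.
elim: w => [//|c w IH] /= /andP [nc nw] _; rewrite deg_cons.
case: w IH nw => [|c' w'] IH nw.
  by rewrite /deg big_nil addr0.
have := IH nw isT; move: nc; rewrite /lneg; lia.
Qed.

Definition goodd (d : int) (ne : bool) (t : fl A) : Prop :=
  forall p, p \in t -> [/\ all lneg p.2, deg p.2 = d & (ne -> p.2 != [::])].

Lemma rho1_deg l w : all lneg w -> goodd (deg w + l.1) true (rho1 l w).
Proof.
elim: w l => [|c w IH] l nw.
  case nl: (lneg l); last by rewrite rho1_nil ?nl.
  rewrite rho1_neg // => p; rewrite inE => /eqP -> /=; split => //.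
    by rewrite nl.
  by rewrite deg_cons /deg big_nil; ring.
move: (nw) => /= /andP [nc nw'].
case nl: (lneg l).
  rewrite rho1_neg // => p; rewrite inE => /eqP -> /=; split => //.
    by rewrite nl nc.
  rewrite !deg_cons; ring.
rewrite rho1_cons ?nl // => p; rewrite mem_cat => /orP [].
  move: p; apply: (mem_lin (P := fun x => [/\ all lneg x, deg x = deg (c :: w) + l.1 & (true -> x != [::])])).
  move=> q /(IH l nw') [q1 q2 q3] p; rewrite inE => /eqP -> /=; split => //.
    by rewrite nc.
  by rewrite !deg_cons q2; ring.
have [k0|k0] := eqVneq (kap l c) 0 => //.
move=> /mem_scale [q /(IH _ nw') [q1 q2 q3] ->]; split => //.
by rewrite q2 deg_cons /ladd /=; ring.
Qed.

Lemma RhoW_deg b d ne t : goodd d ne t ->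
  goodd (deg b + d) (ne || (b != [::])) (RhoW b t).
Proof.
elim: b => [|l b IH] Ht /=.
  by rewrite /deg big_nil add0r orbF.
move=> p; apply: (mem_lin (P := fun x => [/\ all lneg x, deg x = deg (l :: b) + d & (ne || true -> x != [::])])).
move=> q /(IH Ht) [q1 q2 q3] p' /(rho1_deg (l := l) q1) [p1 p2 p3]; split => //.
  by rewrite p2 q2 deg_cons; ring.
by move=> _; apply: p3.
Qed.

Lemma unit_good : goodd 0 false unit1.
Proof. by move=> p; rewrite inE => /eqP -> /=; split => //; rewrite /deg big_nil. Qed.

Lemma goodd_nil d t : 0 <= d -> goodd d true t -> t = [::].
Proof.
case: t => [//|p t] d0 H; case: (H p (mem_head _ _)) => p1 p2 p3.
have := deg_neg p1 (p3 isT); rewrite p2; move: d0; lia.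
Qed.

Lemma R_Mplus w : Mplus w -> Rw w = [::].
Proof.
case=> sz [i ilt si].
rewrite /Rw -(cat_take_drop i w) RhoW_cat.
have dne : drop i w != [::].
  by rewrite -size_eq0 size_drop subn_eq0 -ltnNge.
have := RhoW_deg (b := drop i w) unit_good; rewrite orFb dne addr0 => H.
by rewrite (goodd_nil _ H) ?RhoW_nil.
Qed.

Lemma R_neg w : all lneg w -> ev (Rw w) =1 ev [:: (1, w)].
Proof.
elim: w => [|l w IH] //= /andP [nl nw] x.
rewrite -/(Rho _ _) (ev_lin_ext _ (IH nw)) ev_Rho1 rho1_neg //.
Qed.

Local Notation series := (series A).

Lemma smul_ext (mu1 mu2 nu1 nu2 : series) : mu1 =1 mu2 -> nu1 =1 nu2 ->
  smul mu1 nu1 =1 smul mu2 nu2.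
Proof. move=> e1 e2 w; rewrite /smul; apply: eq_bigr => i _; by rewrite e1 e2. Qed.

Lemma smul_sumr (I : Type) (ts : seq (Cx * I)) (F : I -> series) (mu : series) :
  smul mu (fun w => \sum_(p <- ts) p.1 * F p.2 w) =1
  fun w => \sum_(p <- ts) p.1 * smul mu (F p.2) w.
Proof.
move=> w; rewrite /smul.
under eq_bigr => i _ do rewrite mulr_sumr.
rewrite exchange_big /=; apply: eq_bigr => p _; rewrite mulr_sumr.
apply: eq_bigr => i _; ring.
Qed.

Lemma smul_suml (I : Type) (ts : seq (Cx * I)) (F : I -> series) (nu : series) :
  smul (fun w => \sum_(p <- ts) p.1 * F p.2 w) nu =1
  fun w => \sum_(p <- ts) p.1 * smul (F p.2) nu w.
Proof.
move=> w; rewrite /smul.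
under eq_bigr => i _ do rewrite mulr_suml.
rewrite exchange_big /=; apply: eq_bigr => p _; rewrite mulr_sumr.
apply: eq_bigr => i _; ring.
Qed.

Lemma smul_addr (mu nu1 nu2 : series) :
  smul mu (fun w => nu1 w + nu2 w) =1 fun w => smul mu nu1 w + smul mu nu2 w.
Proof. move=> w; rewrite /smul -big_split; apply: eq_bigr => i _ /=; ring. Qed.

Lemma smul_addl (mu1 mu2 nu : series) :
  smul (fun w => mu1 w + mu2 w) nu =1 fun w => smul mu1 nu w + smul mu2 nu w.
Proof. move=> w; rewrite /smul -big_split; apply: eq_bigr => i _ /=; ring. Qed.

Lemma smul_scalel k (mu nu : series) :
  smul (fun w => k * mu w) nu =1 fun w => k * smul mu nu w.
Proof. move=> w; rewrite /smul mulr_sumr; apply: eq_bigr => i _ /=; ring. Qed.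

Lemma ev_ind (t : fl A) : ev t =1 fun w => \sum_(p <- t) p.1 * ind p.2 w.
Proof. move=> w; rewrite /ev /ind; apply: eq_bigr => p _; by rewrite eq_sym. Qed.

Lemma smul_ind (u v : wd) : smul (ind u) (ind v) =1 ind (u ++ v).
Proof.
move=> a; rewrite /smul /ind.
case: (a =P u ++ v) => [->|ne].
  have lt : (size u < (size (u ++ v)).+1)%N by rewrite ltnS size_cat leq_addr.
  rewrite (bigD1 (Ordinal lt)) //= take_size_cat // drop_size_cat // !eqxx mul1r.
  rewrite big1 ?addr0 // => i /eqP ni.
  case: eqP => [e|_]; last by rewrite mul0r.
  exfalso; apply: ni; apply: val_inj => /=.
  have := congr1 size e; rewrite size_take.
  have := ltn_ord i; rewrite ltnS leq_eqVlt => /orP [/eqP ->|->] //.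
  by rewrite ltnn => ->.
rewrite big1 // => i _; case: eqP => [e1|_]; last by rewrite mul0r.
case: eqP => [e2|_]; last by rewrite mulr0.
by exfalso; apply: ne; rewrite -e1 -e2 cat_take_drop.
Qed.

Lemma smul_supp (mu nu : series) w : smul mu nu w != 0 ->
  exists i, mu (take i w) != 0 /\ nu (drop i w) != 0.
Proof.
rewrite /smul => /eqP H.
case: (pickP (fun i : 'I_(size w).+1 => mu (take i w) * nu (drop i w) != 0)) => [i Hi|H0].
  by exists i; move: Hi; rewrite mulf_eq0 negb_or => /andP [].
exfalso; apply: H; apply: big1 => i _; have := H0 i; by move/negbFE/eqP.
Qed.

Lemma ev_supp (t : fl A) w : ev t w != 0 -> w \in map snd t.
Proof.
apply: contraR => nw; apply/eqP; rewrite /ev big1_seq // => p /andP [_ pt].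
case: eqP => [e|_]; last by rewrite mulr0.
by exfalso; apply: (negP nw); rewrite -e; apply: map_f.
Qed.

Lemma in_MS_Sw (w : wd) : in_MS S w <-> Sw w.
Proof. split=> H x /InE; exact: H. Qed.

Lemma inF_ev (t : fl A) : (forall p, p \in t -> Sw p.2) -> inF S (ev t).
Proof.
move=> H; split.
  move=> w /ev_supp /mapP [p pt ->]; apply/in_MS_Sw; exact: H.
move=> j; exists (map snd t) => w /ev_supp ? _; done.
Qed.

Lemma inF_ind (u : wd) : Sw u -> inF S (ind u).
Proof.
move=> Su; have e : ev [:: (1, u)] =1 ind u by move=> w; rewrite ev1 /ind eq_sym.
split.
  move=> w; rewrite -e => /ev_supp; rewrite inE => /eqP ->; exact/in_MS_Sw.
move=> j; exists [:: u] => w; rewrite -e => /ev_supp //.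
Qed.

Lemma inF_scale k (mu : series) : inF S mu -> inF S (fun w => k * mu w).
Proof.
case=> H1 H2; split.
  move=> w; rewrite mulf_eq0 negb_or => /andP [_ /H1] //.
move=> j; case: (H2 j) => s Hs; exists s => w; rewrite mulf_eq0 negb_or.
by move=> /andP [_ /Hs].
Qed.

Lemma inF_add (mu nu : series) : inF S mu -> inF S nu -> inF S (fun w => mu w + nu w).
Proof.
case=> H1 H2 [K1 K2]; split.
  move=> w Hw; case: (mu w =P 0) => [e|/eqP m0]; last exact: H1.
  apply: K1; by move: Hw; rewrite e add0r.
move=> j; case: (H2 j) => s1 Hs1; case: (K2 j) => s2 Hs2; exists (s1 ++ s2) => w Hw le.
rewrite mem_cat; case: (mu w =P 0) => [e|/eqP m0]; last by rewrite (Hs1 _ m0 le).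
by rewrite (Hs2 w) ?orbT //; move: Hw; rewrite e add0r.
Qed.

Lemma inF_restr (P : pred wd) (mu : series) : inF S mu -> inF S (fun w => if P w then mu w else 0).
Proof.
case=> H1 H2; split.
  by move=> w; case: (P w); [exact: H1|rewrite eqxx].
move=> j; case: (H2 j) => s Hs; exists s => w; case: (P w); first exact: Hs.
by rewrite eqxx.
Qed.

Lemma inI_ext (mu nu : series) : inI S C mu -> mu =1 nu -> inI S C nu.
Proof. move=> H e; have -> : nu = mu by apply: functional_extensionality => w; rewrite e. done. Qed.

Lemma inI_scale k (mu : series) : inI S C mu -> inI S C (fun w => k * mu w).
Proof.
elim=> {mu}.
- by apply: (inI_ext (inI0 S C)) => w; rewrite /szero mulr0.
- move=> m1 m2 _ H1 _ H2; apply: (inI_ext (inIadd H1 H2)) => w; rewrite /sadd; ring.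
- move=> u v al m be l Fu Fv Sal Sbe.
  apply: (inI_ext (inIgen C m l (inF_scale k Fu) Fv Sal Sbe)) => w.
  rewrite (smul_ext (smul_scalel k u (gen C al m be l)) (frefl v)) smul_scalel.
  done.
Qed.

Lemma smul_ind3 (u x v : wd) : smul (smul (ind u) (ind x)) (ind v) =1 ind (u ++ x ++ v).
Proof.
move=> w; rewrite (smul_ext (smul_ind u x) (frefl _) w) smul_ind catA //.
Qed.

Lemma gen_sum (a b : letter) : gen C a.2 a.1 b.2 b.1 =1 fun w =>
  \sum_(p <- [:: (1, [:: a; b]); (-1, [:: b; a]); (- kap a b, [:: ladd a b])]) p.1 * ind p.2 w.
Proof.
case: a => m al; case: b => l be w.
rewrite /gen !big_cons big_nil /= /kap /ladd /=; ring.
Qed.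

Lemma smul_gen (u v : wd) (a b : letter) :
  smul (smul (ind u) (gen C a.2 a.1 b.2 b.1)) (ind v) =1 ev (genl u a b v).
Proof.
move=> w.
rewrite (smul_ext (smul_ext (frefl (ind u)) (gen_sum a b)) (frefl _) w).
rewrite (smul_ext (smul_sumr _ _ _) (frefl _) w) (smul_suml _ (fun x => smul (ind u) (ind x))) !big_cons big_nil /=.
rewrite !smul_ind3 ev_genl /ind /= ![w == _]eq_sym; ring.
Qed.

Lemma NSw_Sw (w : wd) : NSw w -> Sw w.
Proof. by move=> H x /H []. Qed.

Lemma J_inI (t : fl A) : J t -> inI S C (ev t).
Proof.
elim=> {t}.
- by apply: (inI_ext (inI0 S C)) => w; rewrite ev_nil.
- move=> t1 t2 _ H1 _ H2; apply: (inI_ext (inIadd H1 H2)) => w; by rewrite ev_cat.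
- move=> k t _ H; apply: (inI_ext (inI_scale k H)) => w; by rewrite ev_scale.
- move=> t t' _ H e; exact: (inI_ext H e).
- move=> u a b v Nu Sa na Sb nb Nv.
  apply: (inI_ext (inIgen C a.1 b.1 (inF_ind (NSw_Sw Nu)) (inF_ind (NSw_Sw Nv)) Sa Sb)).
  exact: smul_gen.
Qed.

Definition Mplusb (w : wd) : bool :=
  (0 < size w)%N && has (fun i => 0 <= suffix_sum w i) (iota 0 (size w)).
Definition word_leb (w : wd) (j : int) : bool :=
  all (fun i => suffix_sum w i <= j) (iota 0 (size w)).

Lemma MplusP w : reflect (Mplus w) (Mplusb w).
Proof.
apply: (iffP andP) => [[s H]|[s [i il si]]].
  case/hasP: H => i; rewrite mem_iota add0n => /andP [_ il] si; split => //; by exists i.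
by split => //; apply/hasP; exists i => //; rewrite mem_iota add0n il.
Qed.

Lemma word_leP w j : reflect (word_le w j) (word_leb w j).
Proof.
apply: (iffP allP) => H.
  by move=> i il; apply: H; rewrite mem_iota add0n il.
by move=> i; rewrite mem_iota add0n => /andP [_ il]; apply: H.
Qed.

Lemma suffix_cat (y r : wd) i : (i < size y)%N ->
  suffix_sum (y ++ r) i = suffix_sum y i + deg r.
Proof. by move=> il; rewrite /suffix_sum drop_cat il big_cat. Qed.

Lemma Mplus_drop (w : wd) i : Mplus (drop i w) -> Mplus w.
Proof.
case=> s [k kl ks]; rewrite size_drop in s kl.
split; first by move: s; rewrite subn_gt0; case: (size w).
exists (i + k)%N; first by move: kl; rewrite ltn_subRL.
by move: ks; rewrite /suffix_sum drop_drop addnC.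
Qed.

Lemma notMplus_le (w : wd) : ~ Mplus w -> word_le w (-1).
Proof.
move=> H i il; rewrite leNgt; apply/negP => si; apply: H; split.
  by case: (size w) il.
by exists i => //; move: si; rewrite /Num.Def.ltr /=; lia.
Qed.

Lemma sum_pick (s : seq wd) (f : wd -> Cx) w0 : uniq s ->
  \sum_(c <- s) f c * (c == w0)%:R = if w0 \in s then f w0 else 0.
Proof.
move=> us; case: ifP => ws.
  rewrite (bigD1_seq w0) //= eqxx mulr1 big1 ?addr0 // => c /negbTE ->.
  by rewrite mulr0.
rewrite big1_seq // => c /andP [_ cs]; case: eqP => [e|_]; last by rewrite mulr0.
by move: ws; rewrite -e cs.
Qed.

Lemma restr_ev (mu : series) (P : pred wd) (s : seq wd) :
  (forall w, mu w != 0 -> P w -> w \in s) ->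
  (fun w => if P w then mu w else 0) =1
  ev [seq (mu c, c) | c <- filter (fun c => (mu c != 0) && P c) (undup s)].
Proof.
move=> H w; rewrite /ev big_map /= sum_pick ?filter_uniq ?undup_uniq //.
rewrite mem_filter mem_undup.
case: (mu w =P 0) => [->|/eqP m0] /=; first by case: (P w); case: (w \in s).
by case Pw: (P w) => //=; rewrite (H _ m0 Pw).
Qed.

Definition Phi (s : seq wd) (mu : series) : fl A :=
  flatten [seq scale (mu w) (Rw w) | w <- s].

Lemma ev_Phi s mu w0 : ev (Phi s mu) w0 = \sum_(w <- s) mu w * ev (Rw w) w0.
Proof. by rewrite /Phi ev_flatten big_map; apply: eq_bigr => w _; rewrite ev_scale. Qed.

Definition covers (s : seq wd) (mu : series) : Prop :=
  forall w, mu w != 0 -> ~~ Mplusb w -> w \in s.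

Lemma Phi_filter s mu w0 : \sum_(w <- s) mu w * ev (Rw w) w0 =
  \sum_(w <- filter (fun w => (mu w != 0) && ~~ Mplusb w) s) mu w * ev (Rw w) w0.
Proof.
rewrite big_filter [RHS]big_mkcond /=; apply: eq_bigr => w _.
case: (mu w =P 0) => [->|_] /=; first by rewrite mul0r.
case: (MplusP w) => [/R_Mplus ->|_] /=; last by [].
by rewrite ev_nil mulr0.
Qed.

Lemma Phi_indep s1 s2 mu : uniq s1 -> uniq s2 -> covers s1 mu -> covers s2 mu ->
  ev (Phi s1 mu) =1 ev (Phi s2 mu).
Proof.
move=> u1 u2 c1 c2 w0; rewrite !ev_Phi (Phi_filter s1) (Phi_filter s2).
apply: perm_big; apply: uniq_perm; rewrite ?filter_uniq // => w.
rewrite !mem_filter; case P: ((mu w != 0) && ~~ Mplusb w) => //=.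
case/andP: P => m0 nm; by rewrite (c1 _ m0 nm) (c2 _ m0 nm).
Qed.

Definition PhiZ (mu : series) : Prop :=
  exists s, [/\ uniq s, covers s mu & J (Phi s mu)].

Lemma PhiZ_all mu s : PhiZ mu -> uniq s -> covers s mu -> J (Phi s mu).
Proof.
case=> s0 [u0 c0 J0'] us cs; apply: (Jev J0'); exact: Phi_indep.
Qed.

Lemma PhiZ_ext (mu nu : series) : mu =1 nu -> PhiZ mu -> PhiZ nu.
Proof.
move=> e [s [us cs Js]]; exists s; split => //.
  by move=> w; rewrite -e; apply: cs.
apply: (Jev Js) => w0; rewrite !ev_Phi; apply: eq_bigr => w _; by rewrite e.
Qed.

Lemma PhiZ_plus (mu : series) : (forall w, mu w != 0 -> Mplusb w) -> PhiZ mu.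
Proof.
move=> H; exists [::]; split => //; last exact: J0.
by move=> w /H ->.
Qed.

Lemma PhiZ_add (mu nu : series) : PhiZ mu -> PhiZ nu -> PhiZ (fun w => mu w + nu w).
Proof.
move=> Hm Hn; case: (Hm) => s1 [u1 c1 _]; case: (Hn) => s2 [u2 c2 _].
set s := undup (s1 ++ s2).
have us : uniq s by apply: undup_uniq.
have cm : covers s mu by move=> w m0 nm; rewrite mem_undup mem_cat (c1 _ m0 nm).
have cn : covers s nu by move=> w m0 nm; rewrite mem_undup mem_cat (c2 _ m0 nm) orbT.
exists s; split => //.
  move=> w H nm; case: (mu w =P 0) => [e|/eqP m0]; last exact: cm.
  by apply: cn => //; move: H; rewrite e add0r.
apply: (Jev (Japp (PhiZ_all Hm us cm) (PhiZ_all Hn us cn))) => w0.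
rewrite ev_cat !ev_Phi -big_split; apply: eq_bigr => w _ /=; ring.
Qed.

Lemma PhiZ_scale k (mu : series) : PhiZ mu -> PhiZ (fun w => k * mu w).
Proof.
case=> s [us cs Js]; exists s; split => //.
  by move=> w; rewrite mulf_eq0 negb_or => /andP [_ /cs].
apply: (Jev (Jscale k Js)) => w0; rewrite ev_scale !ev_Phi mulr_sumr.
apply: eq_bigr => w _; ring.
Qed.

Lemma PhiZ_sum (I : eqType) (ts : seq (Cx * I)) (F : I -> series) :
  (forall p, p \in ts -> PhiZ (F p.2)) ->
  PhiZ (fun w => \sum_(p <- ts) p.1 * F p.2 w).
Proof.
elim: ts => [|p ts IH] H.
  by apply: PhiZ_plus => w; rewrite big_nil eqxx.
apply: (PhiZ_ext (mu := fun w => p.1 * F p.2 w + \sum_(q <- ts) q.1 * F q.2 w)).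
  by move=> w; rewrite big_cons.
apply: PhiZ_add; first by apply: PhiZ_scale; apply: H; rewrite mem_head.
by apply: IH => q qt; apply: H; rewrite inE qt orbT.
Qed.

Lemma PhiZ_list (t : fl A) : J (lin Rw t) -> PhiZ (ev t).
Proof.
move=> Jt; set s := undup (map snd t).
have us : uniq s by apply: undup_uniq.
exists s; split => //.
  by move=> w /ev_supp ws _; rewrite mem_undup.
apply: (Jev Jt) => w0; rewrite ev_Phi ev_lin.
rewrite (sum_ev (fun x => ev (Rw x) w0) us) //.
by move=> p pt; rewrite mem_undup; apply: map_f.
Qed.

Lemma gen_deg al m be l (z : wd) : gen C al m be l z != 0 -> deg z = m + l.
Proof.
rewrite /gen /ind.
case: (z =P [:: (m, al); (l, be)]) => [->|_]; first by move=> _; rewrite /deg !big_cons big_nil /=; ring.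
case: (z =P [:: (l, be); (m, al)]) => [->|_]; first by move=> _; rewrite /deg !big_cons big_nil /=; ring.
case: (z =P [:: (m + l, al + be)]) => [->|_]; first by move=> _; rewrite /deg !big_cons big_nil /=; ring.
by rewrite /= subrr mulr0 subr0 eqxx.
Qed.

Lemma inF_Sw (mu : series) w : inF S mu -> mu w != 0 -> Sw w.
Proof. by case=> H _ /H /in_MS_Sw. Qed.

Lemma PhiZ_gen_c (u : series) al m be l (c : wd) : inF S u -> S al -> S be -> Sw c ->
  PhiZ (smul (smul u (gen C al m be l)) (ind c)).
Proof.
move=> Fu Sal Sbe Sc.
set g := gen C al m be l.
set j := -1 - (m + l + deg c).
set uf := fun w => if word_leb w j then u w else 0.
set ug := fun w => if word_leb w j then 0 else u w.
have eu : u =1 fun w => uf w + ug w.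
  by move=> w; rewrite /uf /ug; case: (word_leb w j); rewrite ?addr0 ?add0r.
apply: (PhiZ_ext (mu := fun w => smul (smul uf g) (ind c) w + smul (smul ug g) (ind c) w)).
  move=> w; rewrite (smul_ext (smul_ext eu (frefl g)) (frefl _) w).
  by rewrite (smul_ext (smul_addl uf ug g) (frefl _) w) smul_addl.
apply: PhiZ_add.
  case: (Fu) => _ /(_ j) [su Hsu].
  have ef := restr_ev (P := fun w => word_leb w j) (s := su)
    (fun w m0 le => Hsu w m0 (elimT (word_leP w j) le)).
  set tu := [seq (u c0, c0) | c0 <- _] in ef.
  apply: (PhiZ_ext (mu := fun w => \sum_(p <- tu) p.1 *
     smul (smul (ind p.2) g) (ind c) w)).
    move=> w; rewrite (smul_ext (smul_ext ef (frefl g)) (frefl _) w).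
    rewrite (smul_ext (smul_ext (ev_ind tu) (frefl g)) (frefl _) w).
    rewrite (smul_ext (smul_suml _ _ _) (frefl _) w).
    by rewrite (smul_suml _ (fun x => smul (ind x) g)).
  apply: (PhiZ_sum (F := fun x => smul (smul (ind x) g) (ind c))) => p /mapP [b]; rewrite mem_filter => /andP [/andP [ub _] _] -> /=.
  apply: (PhiZ_ext (mu := ev (genl b (m, al) (l, be) c))).
    by move=> w; rewrite -smul_gen.
  apply: PhiZ_list; apply: J_genR => //.
  exact: (inF_Sw Fu ub).
apply: PhiZ_plus => w /smul_supp [i [H1 H2]].
move: H2; rewrite /ind; case: (drop i w =P c) => [ed _|_ /= //]; last by rewrite eqxx.
case/smul_supp: H1 => i' [H3 H4].
move: H3; rewrite /ug; case: (word_leP (take i' (take i w)) j) => [_|nle]; first by rewrite eqxx.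
move=> _; have dz := gen_deg H4.
have [k kl kj] : exists2 k, (k < size (take i' (take i w)))%N &
    j < suffix_sum (take i' (take i w)) k.
  have : ~~ word_leb (take i' (take i w)) j by apply/word_leP.
  rewrite /word_leb -has_predC => /hasP [k]; rewrite mem_iota add0n => /andP [_ kl] /= kj.
  by exists k => //; rewrite ltNge.
have hs : (size (take i' (take i w)) <= size w)%N.
  by rewrite !size_take_min; apply: leq_trans (geq_minr _ _) (geq_minr _ _).
apply/MplusP; split.
  exact: (leq_trans (leq_trans (ltn0Sn k) kl) hs).
exists k; first exact: (leq_trans kl hs).
rewrite -(cat_take_drop i w) -(cat_take_drop i' (take i w)) -catA suffix_cat //.
rewrite deg_cat dz ed; move: kj; rewrite /j; lia.
Qed.

Lemma PhiZ_gen (u v : series) al m be l : inF S u -> inF S v -> S al -> S be ->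
  PhiZ (smul (smul u (gen C al m be l)) v).
Proof.
move=> Fu Fv Sal Sbe.
set X := smul u (gen C al m be l).
set vf := fun w => if ~~ Mplusb w then v w else 0.
set vp := fun w => if ~~ Mplusb w then 0 else v w.
have ev' : v =1 fun w => vf w + vp w.
  by move=> w; rewrite /vf /vp; case: (~~ Mplusb w); rewrite ?addr0 ?add0r.
apply: (PhiZ_ext (mu := fun w => smul X vf w + smul X vp w)).
  by move=> w; rewrite (smul_ext (frefl X) ev' w) smul_addr.
apply: PhiZ_add; last first.
  apply: PhiZ_plus => w /smul_supp [i [_ H]].
  move: H; rewrite /vp; case: (MplusP (drop i w)) => [H _|_ /=]; last by rewrite eqxx.
  by apply/MplusP; apply: Mplus_drop H.
case: (Fv) => _ /(_ (-1)) [sv Hsv].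
have ef := restr_ev (P := fun w => ~~ Mplusb w) (s := sv)
  (fun w m0 nm => Hsv w m0 (notMplus_le (fun H => (elimN (MplusP w) nm) H))).
set tv := [seq (v c0, c0) | c0 <- _] in ef.
apply: (PhiZ_ext (mu := fun w => \sum_(p <- tv) p.1 * smul X (ind p.2) w)).
  move=> w; rewrite (smul_ext (frefl X) ef w) (smul_ext (frefl X) (ev_ind tv) w).
  by rewrite smul_sumr.
apply: (PhiZ_sum (F := fun x => smul X (ind x))) => p /mapP [c].
rewrite mem_filter => /andP [/andP [vc _] _] -> /=.
apply: PhiZ_gen_c => //; exact: (inF_Sw Fv vc).
Qed.

Lemma inI_PhiZ (mu : series) : inI S C mu -> PhiZ mu.
Proof.
elim=> {mu}.
- by apply: PhiZ_plus => w; rewrite /szero eqxx.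
- move=> m1 m2 _ H1 _ H2; exact: PhiZ_add.
- move=> u v al m be l Fu Fv Sal Sbe; exact: PhiZ_gen.
Qed.

Lemma Mminus_le (w : wd) : Mminus w -> word_le w (-1).
Proof.
move=> H i il; rewrite /suffix_sum -/(deg _); apply: deg_neg.
  by apply/allP => x /mem_drop xw; apply: H; apply/InE.
by rewrite -size_eq0 size_drop subn_eq0 -ltnNge.
Qed.

Lemma part2 (mum mup : series) : inF S mum -> supp_in mum (@Mminus _) ->
  inF S mup -> supp_in mup (@Mplus _) -> inI S C (ssub mum mup) -> inI S C mum.
Proof.
move=> Fm Mm Fp Mp /inI_PhiZ HZ.
case: (Fm) => _ /(_ (-1)) [s0 Hs0].
set s := undup s0.
have us : uniq s by apply: undup_uniq.
have cs : covers s (ssub mum mup).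
  move=> w H nm; rewrite mem_undup.
  have p0 : mup w = 0.
    by apply/eqP; apply: contraT => /Mp Hw; move: nm; rewrite (introT (MplusP w) Hw).
  have m0 : mum w != 0 by move: H; rewrite /ssub p0 subr0.
  exact: (Hs0 w m0 (Mminus_le (Mm w m0))).
have HJ := PhiZ_all HZ us cs.
apply: (inI_ext (J_inI HJ)) => w0; rewrite ev_Phi.
have -> : \sum_(w <- s) ssub mum mup w * ev (Rw w) w0 =
          \sum_(w <- s) mum w * (w == w0)%:R.
  apply: eq_bigr => w _; rewrite /ssub.
  case: (mup w =P 0) => [->|/eqP p0]; last first.
    rewrite (R_Mplus (Mp w p0)) ev_nil mulr0.
    case: (mum w =P 0) => [->|/eqP m0]; first by rewrite mul0r.
    exfalso; have := Mm w m0; have := Mp w p0; case=> sz [i il si] Hm.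
    have := Mminus_le Hm il; move: si; lia.
  rewrite subr0; case: (mum w =P 0) => [->|/eqP m0]; first by rewrite !mul0r.
  rewrite (R_neg _) ?ev1 //; apply/allP => x xw; apply: (Mm w m0); exact/InE.
rewrite sum_pick //; case: ifP => // ws.
by apply/esym/eqP; apply: contraFT ws => m0; rewrite mem_undup (Hs0 w0 m0 (Mminus_le (Mm w0 m0))).
Qed.

Definition IL (t : fl A) : Prop := inI S C (ev t).

Lemma IL0 : IL [::].
Proof. by apply: (inI_ext (inI0 S C)) => w; rewrite ev_nil. Qed.
Lemma ILapp t1 t2 : IL t1 -> IL t2 -> IL (t1 ++ t2).
Proof. move=> H1 H2; apply: (inI_ext (inIadd H1 H2)) => w; by rewrite ev_cat. Qed.
Lemma ILscale k t : IL t -> IL (scale k t).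
Proof. move=> H; apply: (inI_ext (inI_scale k H)) => w; by rewrite ev_scale. Qed.
Lemma ILev t t' : IL t -> ev t =1 ev t' -> IL t'.
Proof. move=> H e; exact: (inI_ext H e). Qed.

Lemma IL_comb t (ts : seq (Cx * fl A)) : (forall q, q \in ts -> IL q.2) ->
  (forall w, ev t w = \sum_(q <- ts) q.1 * ev q.2 w) -> IL t.
Proof. exact: (Pcomb IL0 ILapp ILscale ILev). Qed.

Lemma inIL_cons (q : Cx * fl A) ts : IL q.2 -> (forall q', q' \in ts -> IL q'.2) ->
  forall q', q' \in q :: ts -> IL q'.2.
Proof. by move=> Hq Hts q'; rewrite inE => /orP [/eqP ->|/Hts]. Qed.

Lemma inIL_nil : forall q : Cx * fl A, q \in [::] -> IL q.2.
Proof. by []. Qed.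

Lemma ILgen p x y q : Sw p -> Sw q -> S x.2 -> S y.2 -> IL (genl p x y q).
Proof.
move=> Sp Sq Sx Sy.
apply: (inI_ext (inIgen C x.1 y.1 (inF_ind Sp) (inF_ind Sq) Sx Sy)).
exact: smul_gen.
Qed.

Definition pre (p : wd) (t : fl A) : fl A := [seq (q.1, p ++ q.2) | q <- t].
Definition GP (t : fl A) : Prop := forall q, q \in t -> Sw q.2 /\ Mplusb q.2.
Definition Good (p w : wd) (tm tp : fl A) : Prop :=
  [/\ NSl tm, GP tp & IL (trip [:: (1, p ++ w)] (pre p tm) 1 (pre p tp))].

Lemma ev_pre p t w : ev (pre p t) w = \sum_(q <- t) q.1 * (p ++ q.2 == w)%:R.
Proof. by rewrite /ev big_map. Qed.

Lemma ev_pre_cat p c t w :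
  ev (pre (p ++ [:: c]) t) w = ev (pre p [seq (q.1, c :: q.2) | q <- t]) w.
Proof. rewrite !ev_pre big_map; apply: eq_bigr => q _ /=; by rewrite -catA. Qed.

Lemma ev_pre_scale p k t w : ev (pre p (scale k t)) w = k * ev (pre p t) w.
Proof. by rewrite !ev_pre /scale big_map mulr_sumr; apply: eq_bigr => q _ /=; ring. Qed.

Lemma ev_pre_app p t1 t2 w : ev (pre p (t1 ++ t2)) w = ev (pre p t1) w + ev (pre p t2) w.
Proof. by rewrite /pre map_cat ev_cat. Qed.

Lemma Sw_cat u v : Sw u -> Sw v -> Sw (u ++ v).
Proof. by move=> Hu Hv x; rewrite mem_cat => /orP [/Hu|/Hv]. Qed.

Lemma Mplus_cons c w : Mplusb w -> Mplusb (c :: w).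
Proof. move/MplusP => H; apply/MplusP; apply: (@Mplus_drop (c :: w) 1); by rewrite /= drop0. Qed.

Lemma GP_app t1 t2 : GP t1 -> GP t2 -> GP (t1 ++ t2).
Proof. by move=> H1 H2 q; rewrite mem_cat => /orP [/H1|/H2]. Qed.
Lemma NSl_app t1 t2 : NSl t1 -> NSl t2 -> NSl (t1 ++ t2).
Proof. by move=> H1 H2 q; rewrite mem_cat => /orP [/H1|/H2]. Qed.
Lemma GP_scale k t : GP t -> GP (scale k t).
Proof. by move=> H q /mem_scale [q' /H Hq ->]. Qed.
Lemma NSl_scale k t : NSl t -> NSl (scale k t).
Proof. by move=> H q /mem_scale [q' /H Hq ->]. Qed.
Lemma GP_mc c t : S c.2 -> GP t -> GP [seq (q.1, c :: q.2) | q <- t].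
Proof.
move=> Sc H q /mapP [q' /H [Sq Mq] ->] /=; split; last exact: Mplus_cons.
by apply/Sw_cons.
Qed.
Lemma NSl_mc c t : S c.2 -> lneg c -> NSl t -> NSl [seq (q.1, c :: q.2) | q <- t].
Proof. move=> Sc nc H q /mapP [q' /H Hq ->] /=; by apply/NSw_cons. Qed.

Lemma Nstep (u : wd) : NSw u -> forall p a, Sw p -> S a.2 -> ~~ lneg a ->
  exists tm tp, Good p (a :: u) tm tp.
Proof.
elim: u => [|c u IH] Nu p a Sp Sa na.
  exists [::], [:: (1, [:: a])]; split => //.
    move=> q; rewrite inE => /eqP -> /=; split; first by move=> x; rewrite inE => /eqP ->.
    apply/MplusP; split => //; exists 0%N => //.
    by move: na; rewrite /suffix_sum /lneg drop0 big_cons big_nil /=; lia.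
  apply: (IL_comb (ts := [::])) => //= w.
  by rewrite ev_trip /pre /= ev_nil !ev1; rewrite big_nil; ring.
case/NSw_cons: Nu => [[Sc nc] Nu].
have Spc : Sw (p ++ [:: c]) by apply: Sw_cat => // x; rewrite inE => /eqP ->.
case: (IH Nu (p ++ [:: c]) a Spc Sa na) => tm1 [tp1 [N1 G1 I1]].
have Igen := ILgen Sp (NSw_Sw Nu) Sa Sc (x := a) (y := c).
have [k0|k0] := eqVneq (kap a c) 0.
  exists [seq (q.1, c :: q.2) | q <- tm1], [seq (q.1, c :: q.2) | q <- tp1]; split.
  - exact: NSl_mc.
  - exact: GP_mc.
  apply: (IL_comb (ts := [:: (1, genl p a c u); (1, trip [:: (1, (p ++ [:: c]) ++ a :: u)]
       (pre (p ++ [:: c]) tm1) 1 (pre (p ++ [:: c]) tp1))])).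
    apply: inIL_cons => //; apply: inIL_cons => //.
  move=> w; rewrite !big_cons big_nil /= !ev_trip ev_genl k0 !ev1 !ev_pre_cat -catA /=.
  ring.
have [tm2 [tp2 [N2 G2 I2]]] : exists tm2 tp2, Good p (ladd a c :: u) tm2 tp2.
  have Sac : S (ladd a c).2 by apply: Ccl.
  case nac: (lneg (ladd a c)).
    exists [:: (1, ladd a c :: u)], [::]; split => //.
      by move=> q; rewrite inE => /eqP -> /=; apply/NSw_cons.
    apply: (IL_comb (ts := [::])) => //= w.
    by rewrite ev_trip /pre /= ev_nil !ev1 big_nil; ring.
  by apply: IH => //; rewrite nac.
exists ([seq (q.1, c :: q.2) | q <- tm1] ++ scale (kap a c) tm2),
       ([seq (q.1, c :: q.2) | q <- tp1] ++ scale (kap a c) tp2); split.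
- by apply: NSl_app; [exact: NSl_mc|exact: NSl_scale].
- by apply: GP_app; [exact: GP_mc|exact: GP_scale].
apply: (IL_comb (ts := [:: (1, genl p a c u); (1, trip [:: (1, (p ++ [:: c]) ++ a :: u)]
     (pre (p ++ [:: c]) tm1) 1 (pre (p ++ [:: c]) tp1));
     (kap a c, trip [:: (1, p ++ ladd a c :: u)] (pre p tm2) 1 (pre p tp2))])).
  apply: inIL_cons => //; apply: inIL_cons => //; apply: inIL_cons => //.
move=> w; rewrite !big_cons big_nil /= !ev_trip ev_genl !ev1 !ev_pre_app !ev_pre_scale !ev_pre_cat -catA /=; ring.
Qed.

Lemma Ncomb p a t : Sw p -> S a.2 -> ~~ lneg a -> NSl t ->
  exists tm tp, [/\ NSl tm, GP tp &
    IL (trip (pre p [seq (q.1, a :: q.2) | q <- t]) (pre p tm) 1 (pre p tp))].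
Proof.
move=> Sp Sa na; elim: t => [|q t IH] Nt.
  exists [::], [::]; split => //; apply: (IL_comb (ts := [::])) => //= w.
  by rewrite ev_trip /pre /= ev_nil big_nil; ring.
have Nq : NSw q.2 by apply: Nt; rewrite mem_head.
have Nt' : NSl t by move=> q' q't; apply: Nt; rewrite inE q't orbT.
case: (IH Nt') => tm1 [tp1 [N1 G1 I1]].
case: (Nstep Nq Sp Sa na) => tm2 [tp2 [N2 G2 I2]].
exists (scale q.1 tm2 ++ tm1), (scale q.1 tp2 ++ tp1); split.
- by apply: NSl_app => //; apply: NSl_scale.
- by apply: GP_app => //; apply: GP_scale.
apply: (IL_comb (ts := [:: (q.1, trip [:: (1, p ++ a :: q.2)] (pre p tm2) 1 (pre p tp2));
   (1, trip (pre p [seq (q0.1, a :: q0.2) | q0 <- t]) (pre p tm1) 1 (pre p tp1))])).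
  by apply: inIL_cons => //; apply: inIL_cons.
move=> w; rewrite !big_cons big_nil /= !ev_trip !ev_pre_app !ev_pre_scale ev1.
rewrite ev_cons /=; ring.
Qed.

Lemma Qstep (w : wd) : Sw w -> forall p, Sw p -> exists tm tp, Good p w tm tp.
Proof.
elim: w => [|a w IH] Sw0 p Sp.
  exists [:: (1, [::])], [::]; split => //.
    by move=> q; rewrite inE => /eqP ->.
  apply: (IL_comb (ts := [::])) => //= w.
  by rewrite ev_trip /pre /= ev_nil !ev1 cats0 big_nil; ring.
case/Sw_cons: Sw0 => Sa Sw'.
have Spa : Sw (p ++ [:: a]) by apply: Sw_cat => // x; rewrite inE => /eqP ->.
case: (IH Sw' _ Spa) => tm1 [tp1 [N1 G1 I1]].
case na: (lneg a).
  exists [seq (q.1, a :: q.2) | q <- tm1], [seq (q.1, a :: q.2) | q <- tp1]; split.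
  - exact: NSl_mc.
  - exact: GP_mc.
  apply: (ILev I1) => x; rewrite !ev_trip !ev_pre_cat !ev1 -catA //.
case: (Ncomb Sp Sa (negbT na) N1) => tm2 [tp2 [N2 G2 I2]].
exists tm2, ([seq (q.1, a :: q.2) | q <- tp1] ++ tp2); split => //.
  by apply: GP_app => //; apply: GP_mc.
apply: (IL_comb (ts := [:: (1, trip [:: (1, (p ++ [:: a]) ++ w)] (pre (p ++ [:: a]) tm1) 1
   (pre (p ++ [:: a]) tp1)); (1, trip (pre p [seq (q.1, a :: q.2) | q <- tm1]) (pre p tm2) 1 (pre p tp2))])).
  by apply: inIL_cons => //; apply: inIL_cons.
move=> x; rewrite !big_cons big_nil /= !ev_trip !ev_pre_app !ev_pre_cat !ev1 -catA /=; ring.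
Qed.

Lemma part1 (mu : series) : inF S mu ->
  exists mum mup, [/\ inF S mum, supp_in mum (@Mminus _), inF S mup,
    supp_in mup (@Mplus _) & inI S C (ssub mu (sadd mum mup))].
Proof.
move=> Fm; case: (Fm) => _ /(_ (-1)) [s0 Hs0].
have ef := restr_ev (P := fun w => ~~ Mplusb w) (s := s0)
  (fun w m0 nm => Hs0 w m0 (notMplus_le (fun H => (elimN (MplusP w) nm) H))).
set F := filter _ (undup s0) in ef.
have SF : forall w, w \in F -> Sw w.
  move=> w; rewrite mem_filter => /andP [/andP [m0 _] _]; exact: (inF_Sw Fm m0).
have [tm [tp [Ntm Gtp Itp]]] : exists tm tp, [/\ NSl tm, GP tp &
    IL (trip [seq (mu w, w) | w <- F] tm 1 tp)].
  elim: F SF {ef} => [|w F IH] SF.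
    exists [::], [::]; split => //; apply: (IL_comb (ts := [::])) => //= x.
    by rewrite ev_trip ev_nil big_nil; ring.
  have SF' : forall x, x \in F -> Sw x by move=> x xF; apply: SF; rewrite inE xF orbT.
  case: (IH SF') => tm1 [tp1 [N1 G1 I1]].
  case: (Qstep (SF w (mem_head _ _)) (p := [::])) => // tm2 [tp2 [N2 G2 I2]].
  exists (scale (mu w) tm2 ++ tm1), (scale (mu w) tp2 ++ tp1); split.
  - by apply: NSl_app => //; apply: NSl_scale.
  - by apply: GP_app => //; apply: GP_scale.
  apply: (IL_comb (ts := [:: (mu w, trip [:: (1, [::] ++ w)] (pre [::] tm2) 1 (pre [::] tp2));
     (1, trip [seq (mu w0, w0) | w0 <- F] tm1 1 tp1)])).
    by apply: inIL_cons => //; apply: inIL_cons.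
  move=> x; rewrite !big_cons big_nil /= !ev_trip !ev_cat !ev_scale ev_cons ev1 !ev_pre.
  rewrite /ev !big_map /=.
  have e1 : forall t : fl A, \sum_(q <- t) q.1 * (q.2 == x)%:R = \sum_(q <- t) q.1 * (q.2 == x)%:R by [].
  ring.
exists (ev tm), (fun w => (if Mplusb w then mu w else 0) + ev tp w); split.
- by apply: inF_ev => q /Ntm /NSw_Sw.
- move=> w /ev_supp /mapP [q /Ntm Nq ->] x /InE /Nq [_]; by rewrite /lneg.
- apply: inF_add; first exact: inF_restr.
  by apply: inF_ev => q /Gtp [].
- move=> w; case: (MplusP w) => [//|_]; rewrite add0r.
  by move/ev_supp/mapP => [q /Gtp [_ /MplusP Hq] ->].
apply: (inI_ext Itp) => w; rewrite ev_trip -ef /ssub /sadd.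
by case: (Mplusb w) => /=; ring.
Qed.
End Rep.

From Stdlib Require Import Classical.

Theorem propositionA6
  (L : vectType Cx) (br : L -> L -> L)
  (Hlie : lie_algebra br) (Hss : semisimple br)
  (h : {vspace L}) (Hh : cartan_subalgebra br h)
  (Pos : hdual h -> Prop) (HPos : positive_system br Pos)
  (x : hdual h -> L)
  (Hx : forall al, is_root br al -> x al != 0 /\ in_rootspace br al (x al))
  (S : hdual h -> Prop)
  (HSne : exists al, S al)
  (HSpos : forall al, S al -> Pos al)
  (HSclosed : forall al be, S al -> S be -> Pos (al + be) -> S (al + be))
  (C : hdual h -> hdual h -> Cx)
  (HC : forall al be, S al -> S be -> br (x al) (x be) = C al be *: x (al + be))
  (HC0 : forall al be, S al -> S be -> ~ is_root br (al + be) -> C al be = 0) :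
  (forall mu, inF S mu ->
     exists mum mup,
       [/\ inF S mum, supp_in mum (@Mminus _), inF S mup, supp_in mup (@Mplus _) &
           inI S C (ssub mu (sadd mum mup))]) /\
  (forall mum mup, inF S mum -> supp_in mum (@Mminus _) ->
     inF S mup -> supp_in mup (@Mplus _) ->
     inI S C (ssub mum mup) -> inI S C mum).
Proof.
case: Hlie => linl linr alt jac.
case: (HPos) => _ _ _ Pcl.
have br0l : forall z, br 0 z = 0.
  move=> z; have H := linl 1 0 0 z; rewrite scaler0 addr0 scale1r in H.
  by apply: (addrI (br 0 z)); rewrite addr0 -H.
have br0r : forall z, br z 0 = 0.
  move=> z; have H := linr 1 0 0 z; rewrite scaler0 addr0 scale1r in H.
  by apply: (addrI (br z 0)); rewrite addr0 -H.
have brZr : forall (a : Cx) y z, br z (a *: y) = a *: br z y.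
  by move=> a y z; have := linr a y 0 z; rewrite addr0 br0r addr0.
have brDl : forall y1 y2 z, br (y1 + y2) z = br y1 z + br y2 z.
  by move=> y1 y2 z; have := linl 1 y1 y2 z; rewrite !scale1r.
have brDr : forall y1 y2 z, br z (y1 + y2) = br z y1 + br z y2.
  by move=> y1 y2 z; have := linr 1 y1 y2 z; rewrite !scale1r.
have anti : forall y z, br y z = - br z y.
  move=> y z; have := alt (y + z); rewrite brDl !brDr !alt add0r addr0.
  by move/eqP; rewrite addr_eq0 => /eqP.
have rootS : forall al, S al -> is_root br al.
  by move=> al Sal; case: HPos => H _ _ _; apply: H; apply: HSpos.
have Ccl : forall a b, S a -> S b -> C a b != 0 -> S (a + b).
  move=> a b Sa Sb nz; apply: HSclosed => //; apply: Pcl; try exact: HSpos.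
  apply: NNPP => nr; by move: nz; rewrite (HC0 _ _ Sa Sb nr) eqxx.
have Canti : forall a b, S a -> S b -> C a b = - C b a.
  move=> a b Sa Sb; case: (classic (is_root br (a + b))) => [r|nr]; last first.
    rewrite (HC0 _ _ Sa Sb nr) (HC0 _ _ Sb Sa) ?oppr0 //; by rewrite addrC.
  have := anti (x a) (x b); rewrite (HC _ _ Sa Sb) (HC _ _ Sb Sa) (addrC b a).
  move/eqP; rewrite -scaleNr -subr_eq0 -scalerBl scaler_eq0 => /orP [|].
    by rewrite subr_eq0 => /eqP.
  by case: (Hx _ r) => /negbTE ->.
have term : forall a b c, S a -> S b -> S c ->
    br (x a) (br (x b) (x c)) = (C b c * C a (b + c)) *: x (a + (b + c)).
  move=> a b c Sa Sb Sc; rewrite (HC _ _ Sb Sc) brZr.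
  have [->|nz] := eqVneq (C b c) 0; first by rewrite !scale0r mul0r scale0r.
  by rewrite (HC _ _ Sa (Ccl _ _ Sb Sc nz)) scalerA.
have prod0 : forall a b c, S a -> S b -> S c -> ~ is_root br (a + (b + c)) ->
    C b c * C a (b + c) = 0.
  move=> a b c Sa Sb Sc nr; have [->|nz] := eqVneq (C b c) 0; first by rewrite mul0r.
  by rewrite (HC0 _ _ Sa (Ccl _ _ Sb Sc nz) nr) mulr0.
have Cjac : forall a b c, S a -> S b -> S c ->
    C b c * C a (b + c) + C c a * C b (c + a) + C a b * C c (a + b) = 0.
  move=> a b c Sa Sb Sc.
  have e1 : b + (c + a) = a + (b + c) by rewrite addrA [RHS]addrC.
  have e2 : c + (a + b) = a + (b + c) by rewrite [LHS]addrC -addrA.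
  case: (classic (is_root br (a + (b + c)))) => [r|nr]; last first.
    have nr1 : ~ is_root br (b + (c + a)) by rewrite e1.
    have nr2 : ~ is_root br (c + (a + b)) by rewrite e2.
    rewrite (prod0 _ _ _ Sa Sb Sc nr) (prod0 _ _ _ Sb Sc Sa nr1).
    by rewrite (prod0 _ _ _ Sc Sa Sb nr2) !addr0.
  have := jac (x a) (x b) (x c).
  rewrite (term _ _ _ Sa Sb Sc) (term _ _ _ Sb Sc Sa) (term _ _ _ Sc Sa Sb) e1 e2.
  rewrite -!scalerDl => /eqP; rewrite scaler_eq0 => /orP [/eqP //|].
  by case: (Hx _ r) => /negbTE ->.
split.
  move=> mu Fm; exact: (part1 Ccl Fm).
move=> mum mup Fm Mm Fp Mp HI; exact: (part2 Ccl Canti Cjac Fm Mm Fp Mp HI).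
Qed.
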